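(* Let $f\colon G\to H$ and $g\colon G\to K$ be graph maps. (1) For integers $p\ge0$ and $q_1,q_2\ge1$, the commutative square \[\begin{array}{ccc} G\square I_p&\xrightarrow{\ r_p(f,\mathrm{id})\ }&\mathrm{Cyl}_{p+q_1}(f,\mathrm{id}_G)\\ {\scriptstyle \ell_p(\mathrm{id},g)}\downarrow&&\downarrow{\scriptstyle \ell_{p+q_1}(f,g)}\\ \mathrm{Cyl}_{p+q_2}(\mathrm{id}_G,g)&\xrightarrow{\ r_{p+q_2}(f,g)\ }&\mathrm{Cyl}_{p+q_1+q_2}(f,g)\end{array}\] is a $(p+1)$-skeletal pushout. (2) If $f$ is injective, (1) also holds when $q_1=0$. (3) If $g$ is injective, (1) also holds when $q_2=0$.
   Context: Graphs are sets with a reflexive symmetric relation; graph maps preserve it. $I_m$ has vertices $0,\dots,m$ and edges $i\sim i+1$; $G\square H$ has vertex set $V(G)\times V(H)$ and $(v,w)\sim(v',w')$ iff ($v=v'$, $w\sim w'$) or ($v\sim v'$, $w=w'$). For $f\colon G\to H$, $g\colon G\to K$, $\mathrm{Cyl}_m(f,g)$ is the quotient of $H\sqcup(G\square I_m)\sqcup K$ by $(v,0)\sim f(v)$, $(v,m)\sim g(v)$ (a colimit in graphs); in particular $\mathrm{Cyl}_p(\mathrm{id}_G,\mathrm{id}_G)\cong G\square I_p$. For $0\le k\le m$: $\ell_k(f,g)\colon\mathrm{Cyl}_k(f,\mathrm{id}_G)\to\mathrm{Cyl}_m(f,g)$ is the identity on $H$ and sends $(v,t)\mapsto(v,t)$;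 $r_k(f,g)\colon\mathrm{Cyl}_k(\mathrm{id}_G,g)\to\mathrm{Cyl}_m(f,g)$ is the identity on $K$ and sends $(v,t)\mapsto(v,t+m-k)$. The $1$-nerve $N_1G$ is the cubical set (presheaf on the box category with faces, degeneracies and connections) whose $k$-cubes are graph maps $I_1^{\square k}\to G$; $\operatorname{sk}^n$ is the subobject generated by cubes of dimension $\le n$. A commutative square of graphs is an $n$-skeletal pushout if applying $\operatorname{sk}^n\circ N_1$ yields a pushout of cubical sets. *)

(* Defs.v *)
From Stdlib Require Import Relations ClassicalEpsilon ProofIrrelevance
  FunctionalExtensionality PropExtensionality.
From HB Require Import structures.
From mathcomp Require Import all_boot.
From mathcomp Require Import zify.

Set Implicit Arguments.
Unset Strict Implicit.
Unset Printing Implicit Defensive.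

Record graph := Graph {
  vert :> Type;
  adj : vert -> vert -> Prop;
  adj_refl : forall x, adj x x;
  adj_sym : forall x y, adj x y -> adj y x }.
Arguments adj {g} _ _.

Definition is_gmap (G H : graph) (f : G -> H) : Prop :=
  forall x y, adj x y -> adj (f x) (f y).

Record gmap (G H : graph) := GMap { gfun :> G -> H; gfunP : is_gmap gfun }.

Definition gid (G : graph) : gmap G G :=
  @GMap G G (fun x => x) (fun x y (h : adj x y) => h).

Lemma sig_eqP (A : Type) (P : A -> Prop) (x y : sig P) :
  proj1_sig x = proj1_sig y -> x = y.
Proof.
case: x => a pa; case: y => b pb /= eab; subst b.
by rewrite (proof_irrelevance _ pa pb).
Qed.

Definition iadj m (i j : 'I_m.+1) : Prop :=
  (i : nat) = j \/ i.+1 = j \/ j.+1 = i.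

Lemma iadj_refl m (i : 'I_m.+1) : iadj i i. Proof. by left. Qed.
Lemma iadj_sym m (i j : 'I_m.+1) : iadj i j -> iadj j i.
Proof. rewrite /iadj; lia. Qed.

Definition intg (m : nat) : graph := Graph (@iadj_refl m) (@iadj_sym m).

Definition bxadj (G H : graph) (x y : G * H) : Prop :=
  (x.1 = y.1 /\ adj x.2 y.2) \/ (adj x.1 y.1 /\ x.2 = y.2).

Lemma bxadj_refl (G H : graph) (x : G * H) : bxadj x x.
Proof. by left; split => //; apply: adj_refl. Qed.
Lemma bxadj_sym (G H : graph) (x y : G * H) : bxadj x y -> bxadj y x.
Proof.
by case=> [[e a]|[a e]]; [left|right]; split => //; apply: adj_sym.
Qed.

Definition boxg (G H : graph) : graph :=
  Graph (@bxadj_refl G H) (@bxadj_sym G H).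

Definition sumadj (A B : graph) (x y : A + B) : Prop :=
  match x, y with
  | inl a, inl a' => adj a a'
  | inr b, inr b' => adj b b'
  | _, _ => False
  end.

Lemma sumadj_refl (A B : graph) (x : A + B) : sumadj x x.
Proof. by case: x => ? /=; apply: adj_refl. Qed.
Lemma sumadj_sym (A B : graph) (x y : A + B) : sumadj x y -> sumadj y x.
Proof. by case: x; case: y => //= ? ?; apply: adj_sym. Qed.

Definition sumg (A B : graph) : graph :=
  Graph (@sumadj_refl A B) (@sumadj_sym A B).

(* Quotient of a graph X by (the equivalence relation generated by) R:
   the colimit in graphs.  Vertices are equivalence classes, and two
   classes are adjacent iff some representatives are. *)
Section Quotient.
Variables (X : graph) (R : X -> X -> Prop).

Definition qeqv : X -> X -> Prop := clos_refl_sym_trans X R.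
Definition qclass (x : X) : X -> Prop := qeqv x.
Definition qvert := {P : X -> Prop | exists x, P = qclass x}.
Definition qadj (P Q : qvert) : Prop :=
  exists x y, proj1_sig P x /\ proj1_sig Q y /\ adj x y.

Lemma qadj_refl P : qadj P P.
Proof.
case: P => P [x ex]; exists x, x; rewrite /= ex; split; first exact: rst_refl.
by split; [exact: rst_refl | apply: adj_refl].
Qed.
Lemma qadj_sym P Q : qadj P Q -> qadj Q P.
Proof. by case=> x [y [px [qy a]]]; exists y, x; do 2 split => //; apply: adj_sym. Qed.

Definition quotg : graph := Graph qadj_refl qadj_sym.

Definition qproj (x : X) : quotg := exist _ (qclass x) (ex_intro _ x erefl).

Lemma qproj_gmap : is_gmap qproj.
Proof.
move=> x y a; change (qadj (qproj x) (qproj y)); rewrite /qadj.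
by exists x, y; split; [exact: rst_refl | split; [exact: rst_refl | done]].
Qed.

Lemma qproj_eq x y : qeqv x y -> qproj x = qproj y.
Proof.
move=> e; apply: sig_eqP => /=; apply: functional_extensionality => z.
apply: propositional_extensionality; split => h.
- by apply: rst_trans h; apply: rst_sym.
- exact: rst_trans e h.
Qed.

Definition qrep (P : quotg) : X :=
  proj1_sig (constructive_indefinite_description _ (proj2_sig P)).

Lemma qrepP (P : quotg) : proj1_sig P = qclass (qrep P).
Proof. exact: (proj2_sig (constructive_indefinite_description _ (proj2_sig P))). Qed.

Variables (Y : graph) (psi : gmap X Y).
Hypothesis psiR : forall x y, R x y -> psi x = psi y.

Lemma psi_eqv x y : qeqv x y -> psi x = psi y.
Proof.
elim.
- by move=> ? ? ?; apply: psiR.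
- by [].
- by move=> ? ? _ ->.
- by move=> ? ? ? _ -> _ ->.
Qed.

Definition qlift (P : quotg) : Y := psi (qrep P).

Lemma qlift_gmap : is_gmap qlift.
Proof.
move=> P Q; case=> x [y [px [qy a]]]; rewrite /qlift.
rewrite qrepP in px; rewrite qrepP in qy.
rewrite (psi_eqv px) (psi_eqv qy); exact: gfunP.
Qed.

Definition qliftg : gmap quotg Y := GMap qlift_gmap.
End Quotient.

(* Mapping cylinders Cyl_m(f,g): the quotient of                      *)
(*   H + (G [] I_m) + K   by  (v,0) ~ f v,  (v,m) ~ g v.              *)
Section Cylinder.
Variables (G H K : graph) (f : gmap G H) (g : gmap G K).

Definition cylX (m : nat) : graph := sumg H (sumg (boxg G (intg m)) K).

Definition cylR (m : nat) (x y : cylX m) : Prop :=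
  exists v : G,
    (x = inr (inl (v, ord0)) /\ y = inl (f v)) \/
    (x = inr (inl (v, ord_max)) /\ y = inr (inr (g v))).

Definition Cyl (m : nat) : graph := quotg (@cylR m).
Definition cproj (m : nat) (x : cylX m) : Cyl m := qproj (@cylR m) x.

Lemma cproj_gmap m : is_gmap (@cproj m).
Proof. exact: qproj_gmap. Qed.

Lemma cproj_R m x y : @cylR m x y -> cproj x = cproj y.
Proof. by move=> r; apply: qproj_eq; apply: rst_step. Qed.
End Cylinder.

Definition clamp (m t : nat) : 'I_m.+1 := inord (minn t m).

Lemma clampE m t : (clamp m t : nat) = minn t m.
Proof. by rewrite /clamp inordK // ltnS geq_minr. Qed.

Lemma clamp_adj m c (a b : nat) :
  (a = b \/ a.+1 = b \/ b.+1 = a) -> iadj (clamp m (a + c)) (clamp m (b + c)).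
Proof. rewrite /iadj !clampE; lia. Qed.

Section Maps.
Variables (G H K : graph) (f : gmap G H) (g : gmap G K).

(* l_k(f,g) : Cyl_k(f, id_G) -> Cyl_m(f,g): identity on H, (v,t) |-> (v,t)
   (the copy of G at the end is glued to the level k, so v |-> (v,k)).
   The level is clamped to [0,m]; for k <= m (the only case used) no
   clamping ever happens. *)
Definition l0 (k m : nat) (x : cylX G H G k) : Cyl f g m :=
  match x with
  | inl h => cproj f g (inl h)
  | inr (inl (v, t)) => cproj f g (inr (inl (v, clamp m (t + 0))))
  | inr (inr v) => cproj f g (inr (inl (v, clamp m (k + 0))))
  end.

(* r_k(f,g) : Cyl_k(id_G, g) -> Cyl_m(f,g): identity on K,
   (v,t) |-> (v, t + m - k) (the initial copy of G is glued to level 0,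
   so v |-> (v, m - k)). *)
Definition r0 (k m : nat) (x : cylX G G K k) : Cyl f g m :=
  match x with
  | inl v => cproj f g (inr (inl (v, clamp m (0 + (m - k)))))
  | inr (inl (v, t)) => cproj f g (inr (inl (v, clamp m (t + (m - k)))))
  | inr (inr w) => cproj f g (inr (inr w))
  end.

Lemma box_adj_cproj m (v v' : G) (t t' : 'I_m.+1) :
  (v = v' /\ iadj t t') \/ (adj v v' /\ t = t') ->
  adj (cproj f g (inr (inl (v, t)))) (cproj f g (inr (inl (v', t')))).
Proof. by move=> h; apply: cproj_gmap. Qed.

Lemma l0_gmap k m : is_gmap (@l0 k m).
Proof.
case=> [h|[[v t]|v]]; case=> [h'|[[v' t']|v']] //= a.
- exact: cproj_gmap.
- apply: box_adj_cproj; case: a => /= [[-> a]|[a ->]]; last by right.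
  by left; split=> //; apply: clamp_adj.
- by apply: box_adj_cproj; right.
Qed.

Lemma l0_R k m x y : @cylR G H G f (gid G) k x y -> @l0 k m x = @l0 k m y.
Proof.
case=> v [[-> ->]|[-> ->]] //=.
apply: cproj_R; exists v; left; split => //; congr (inr (inl (_, _))).
by apply: val_inj; rewrite /= clampE; lia.
Qed.

Lemma r0_gmap k m : is_gmap (@r0 k m).
Proof.
case=> [h|[[v t]|v]]; case=> [h'|[[v' t']|v']] //= a.
- by apply: box_adj_cproj; right.
- apply: box_adj_cproj; case: a => /= [[-> a]|[a ->]]; last by right.
  by left; split=> //; apply: clamp_adj.
- exact: cproj_gmap.
Qed.

Lemma r0_R k m x y : @cylR G G K (gid G) g k x y -> @r0 k m x = @r0 k m y.
Proof.
case=> v [[-> ->]|[-> ->]] //=.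
apply: cproj_R; exists v; right; split => //; congr (inr (inl (_, _))).
by apply: val_inj; rewrite /= clampE; lia.
Qed.

Definition lmap (k m : nat) : gmap (Cyl f (gid G) k) (Cyl f g m) :=
  qliftg (psi := GMap (@l0_gmap k m)) (@l0_R k m).

Definition rmap (k m : nat) : gmap (Cyl (gid G) g k) (Cyl f g m) :=
  qliftg (psi := GMap (@r0_gmap k m)) (@r0_R k m).
End Maps.

(* The box category (with faces, degeneracies and both connections),   *)
(* realised as the subcategory of graphs/posets on the cubes           *)
(* I_1^{[]n}, whose vertices are functions 'I_n -> bool, generated by  *)
(* the face, degeneracy and connection maps.                           *)
Definition cpt (n : nat) := 'I_n -> bool.

Definition cadj n (s t : cpt n) : Prop :=
  forall j j' : 'I_n, s j <> t j -> s j' <> t j' -> j = j'.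

Definition face m (i : 'I_m.+1) (e : bool) (s : cpt m) : cpt m.+1 :=
  fun j => if unlift i j is Some j' then s j' else e.

Definition degen n (i : 'I_n.+1) (s : cpt n.+1) : cpt n :=
  fun j => s (lift i j).

(* connection g_{i,e} : [1]^(n+1) -> [1]^n, replacing coordinates i, i+1
   by their max (e = true) or min (e = false) *)
Definition conn n (i : 'I_n) (e : bool) (s : cpt n.+1) : cpt n :=
  fun j => let b := lift ord0 i in
    if j == i then (if e then s (lift b j) || s b else s (lift b j) && s b)
    else s (lift b j).

Inductive box_map : forall m n : nat, (cpt m -> cpt n) -> Prop :=
| bm_id n : box_map (fun s : cpt n => s)
| bm_face m i e : box_map (@face m i e)
| bm_degen n i : box_map (@degen n i)
| bm_conn n i e : box_map (@conn n i e)
| bm_comp k m n (phi : cpt k -> cpt m) (psi : cpt m -> cpt n) :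
    box_map phi -> box_map psi -> box_map (fun s => psi (phi s)).

Lemma face_cadj m i e (s t : cpt m) : cadj s t -> cadj (face i e s) (face i e t).
Proof.
move=> h j j'; rewrite /face.
case: unliftP => [a ->|->]; last by [].
case: unliftP => [b ->|->]; last by [].
by move=> ha hb; rewrite (h a b ha hb).
Qed.

Lemma degen_cadj n i (s t : cpt n.+1) : cadj s t -> cadj (degen i s) (degen i t).
Proof. by move=> h j j' ha hb; exact: (@lift_inj _ i _ _ (h _ _ ha hb)). Qed.

Lemma conn_cadj n i e (s t : cpt n.+1) : cadj s t -> cadj (conn i e s) (conn i e t).
Proof.
move=> h.
have key : forall j : 'I_n, conn i e s j <> conn i e t j ->
    s (lift (lift ord0 i) j) <> t (lift (lift ord0 i) j) \/
    (j = i /\ s (lift ord0 i) <> t (lift ord0 i)).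
  move=> j; rewrite /conn; case: eqP => [->|_]; last by left.
  case: (boolP (s (lift (lift ord0 i) i) == t (lift (lift ord0 i) i))) => [/eqP ->|/eqP]; last by left.
  case: (boolP (s (lift ord0 i) == t (lift ord0 i))) => [/eqP -> //|/eqP]; by right.
move=> j j' /key hj /key hj'.
case: hj => [hj|[-> hj]]; case: hj' => [hj'|[-> hj']] //.
- exact: (@lift_inj _ (lift ord0 i) _ _ (h _ _ hj hj')).
- by have := h _ _ hj hj' => /eqP; rewrite eq_sym (negbTE (neq_lift _ _)).
- by have := h _ _ hj hj' => /eqP; rewrite (negbTE (neq_lift _ _)).
Qed.

Lemma box_cadj m n (phi : cpt m -> cpt n) : box_map phi ->
  forall s t, cadj s t -> cadj (phi s) (phi t).
Proof.
elim=> {m n phi}.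
- by [].
- by move=> ? ? ? ? ?; apply: face_cadj.
- by move=> ? ? ? ?; apply: degen_cadj.
- by move=> ? ? ? ? ?; apply: conn_cadj.
- by move=> k m n phi psi _ hphi _ hpsi s t h; apply: hpsi; apply: hphi.
Qed.

Unset Implicit Arguments.
Record cset := CSet {
  cell : nat -> Type;
  act : forall m n (phi : cpt m -> cpt n), box_map phi -> cell n -> cell m;
  act_irr : forall m n (phi : cpt m -> cpt n) (p p' : box_map phi) x,
      act m n phi p x = act m n phi p' x;
  act_id : forall n x, act n n (fun s => s) (bm_id n) x = x;
  act_comp : forall k m n (phi : cpt k -> cpt m) (psi : cpt m -> cpt n)
      (p : box_map phi) (q : box_map psi) x,
      act k n (fun s => psi (phi s)) (bm_comp p q) x = act k m phi p (act m n psi q x) }.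
Arguments act c {m n phi} p x.

Record cmap (X Y : cset) := CMap {
  cfun :> forall n, cell X n -> cell Y n;
  cfun_nat : forall m n (phi : cpt m -> cpt n) (p : box_map phi) x,
      cfun m (act X p x) = act Y p (cfun n x) }.
Arguments cfun {X Y} c n x.
Arguments CMap {X Y} cfun cfun_nat.
Set Implicit Arguments.

Definition is_pushout (A B C D : cset) (a : cmap A B) (a' : cmap A C)
    (b : cmap B D) (c : cmap C D) : Prop :=
  (forall n x, b n (a n x) = c n (a' n x)) /\
  forall (T : cset) (hB : cmap B T) (hC : cmap C T),
    (forall n x, hB n (a n x) = hC n (a' n x)) ->
    exists h : cmap D T,
      ((forall n x, h n (b n x) = hB n x) /\ (forall n x, h n (c n x) = hC n x)) /\
      forall h' : cmap D T,
        (forall n x, h' n (b n x) = hB n x) ->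
        (forall n x, h' n (c n x) = hC n x) ->
        forall n x, h' n x = h n x.

(* The 1-nerve N_1 G (k-cubes = graph maps I_1^{[]k} -> G) and its     *)
(* N-skeleton: the k-cubes of the form y o phi with y an m-cube,       *)
(* m <= N, and phi a box map.                                          *)
Definition is_cube (G : graph) n (c : cpt n -> G) : Prop :=
  forall s t, cadj s t -> adj (c s) (c t).

Definition in_sk (G : graph) (N n : nat) (c : cpt n -> G) : Prop :=
  exists m, m <= N /\ exists y : cpt m -> G, is_cube y /\
    exists phi : cpt n -> cpt m, box_map phi /\ c = (fun s => y (phi s)).

Definition skcell (G : graph) (N n : nat) :=
  {c : cpt n -> G | is_cube c /\ in_sk N c}.

Lemma skact_proof (G : graph) N m n (phi : cpt m -> cpt n) (p : box_map phi)
  (x : skcell G N n) :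
  is_cube (fun s => proj1_sig x (phi s)) /\ in_sk N (fun s => proj1_sig x (phi s)).
Proof.
case: x => c [hc [k [hk [y [hy [psi [hpsi ec]]]]]]] /=; split.
- by move=> s t h; apply: hc; apply: box_cadj.
- exists k; split => //; exists y; split => //.
  by exists (fun s => psi (phi s)); split; [exact: bm_comp | rewrite ec].
Qed.

Definition skact (G : graph) N m n (phi : cpt m -> cpt n) (p : box_map phi)
  (x : skcell G N n) : skcell G N m :=
  exist _ (fun s => proj1_sig x (phi s)) (skact_proof p x).

Definition skN (G : graph) (N : nat) : cset.
Proof.
refine (@CSet (skcell G N) (@skact G N) _ _ _).
- by move=> *; apply: sig_eqP.
- by move=> n [c pc]; apply: sig_eqP.
- by move=> *; apply: sig_eqP.
Defined.

Lemma skmap_proof (G H : graph) (f : gmap G H) N n (x : skcell G N n) :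
  is_cube (fun s => f (proj1_sig x s)) /\ in_sk N (fun s => f (proj1_sig x s)).
Proof.
case: x => c [hc [k [hk [y [hy [psi [hpsi ec]]]]]]] /=; split.
- by move=> s t h; apply: gfunP; apply: hc.
- exists k; split => //; exists (fun s => f (y s)); split.
  + by move=> s t h; apply: gfunP; apply: hy.
  + by exists psi; split => //; rewrite ec.
Qed.

Definition skmap (G H : graph) (N : nat) (f : gmap G H) : cmap (skN G N) (skN H N).
Proof.
refine (@CMap (skN G N) (skN H N)
          (fun n x => exist _ (fun s => f (proj1_sig x s)) (skmap_proof f x)) _).
by move=> *; apply: sig_eqP.
Defined.

Definition skel_pushout (N : nat) (A B C D : graph) (a : gmap A B) (a' : gmap A C)
    (b : gmap B D) (c : gmap C D) : Prop :=
  is_pushout (skmap N a) (skmap N a') (skmap N b) (skmap N c).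

Definition cyl_square (G H K : graph) (f : gmap G H) (g : gmap G K)
    (p q1 q2 : nat) : Prop :=
  skel_pushout p.+1
    (rmap f (gid G) p (p + q1))           (* Cyl_p(id,id) = G[]I_p -> Cyl_{p+q1}(f,id) *)
    (lmap (gid G) g p (p + q2))
    (lmap f g (p + q1) (p + q1 + q2))
    (rmap f g (p + q2) (p + q1 + q2)).

(* Main.v *)
Require Import Defs.
From mathcomp Require Import all_boot.
From Stdlib Require Import Relations ClassicalEpsilon ProofIrrelevance
  FunctionalExtensionality PropExtensionality Classical.
From mathcomp Require Import zify.
Set Implicit Arguments.
Unset Strict Implicit.
Unset Printing Implicit Defensive.
Set Bullet Behavior "Strict Subproofs".

Definition subc m (F : 'I_m -> option bool) (t : cpt m) : Prop :=
  forall j b, F j = Some b -> t j = b.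

Definition comb (e : bool) (a b : option bool) : option bool :=
  if e then
    match a, b with
    | Some true, _ => Some true
    | _, Some true => Some true
    | Some false, Some false => Some false
    | _, _ => None
    end
  else
    match a, b with
    | Some false, _ => Some false
    | _, Some false => Some false
    | Some true, Some true => Some true
    | _, _ => None
    end.

Lemma box_subc m n (phi : cpt m -> cpt n) : box_map phi ->
  forall F, exists F', forall u, subc F' u <-> exists t, subc F t /\ phi t = u.
Proof.
elim=> {m n phi}.
- move=> n F; exists F => u; split; first by move=> h; exists u.
  by case=> t [h <-].
- move=> m i e F.
  exists (fun j => if unlift i j is Some j' then F j' else Some e) => u; split.
  + move=> h; exists (fun j' => u (lift i j')); split.
    * move=> j b Fj; apply: h; by rewrite liftK.
    * apply: functional_extensionality => j; rewrite /face.
      case: unliftP => [j' ->|->] //.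
      by symmetry; apply: h; rewrite unlift_none.
  + case=> t [ht <-] j b; rewrite /face.
    case: unliftP => [j' _ |_ ]; first exact: ht.
    by case.
- move=> n i F; exists (fun j => F (lift i j)) => u; split.
  + move=> h; exists (face i (odflt false (F i)) u); split.
    * move=> j b Fj; rewrite /face; case: unliftP Fj => [j' -> Fj|-> Fj].
      -- exact: h.
      -- by rewrite Fj.
    * by apply: functional_extensionality => j; rewrite /degen /face liftK.
  + by case=> t [ht <-] j b Fj; apply: ht.
- move=> n i e F.
  set bb := lift ord0 i.
  exists (fun j => if j == i then comb e (F (lift bb i)) (F bb) else F (lift bb j)).
  move=> u; split.
  + move=> h.
    set x := odflt (u i) (F (lift bb i)).
    set y := odflt (u i) (F bb).
    exists (face bb y (fun j => if j == i then x else u j)); split.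
    * move=> j b Fj; rewrite /face; case: unliftP Fj => [j' -> Fj|-> Fj].
      -- case: eqP => [ej|nej]; first by rewrite /x -ej Fj.
        apply: h; move/eqP/negbTE: nej => ->; exact: Fj.
      -- by rewrite /y Fj.
    * apply: functional_extensionality => j; rewrite /conn /face -/bb liftK unlift_none.
      case: eqP => [->|//].
      have := h i; rewrite eqxx /x /y; clear x y h.
      case: e; case: (F (lift bb i)) => [[]|]; case: (F bb) => [[]|] /=;
        case: (u i) => //= H; try (by rewrite (H _ erefl)); by [].
  + case=> t [ht <-] j b; rewrite /conn.
    case: eqP => [->|_]; last by apply: ht.
    rewrite -/bb; move: (ht (lift bb i)) (ht bb); clear ht.
    case: e; case: (F (lift bb i)) => [[]|]; case: (F bb) => [[]|] /= H1 H2 E;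
      try discriminate E; case: E => <-; rewrite ?(H1 _ erefl) ?(H2 _ erefl) ?orbT ?andbF //.
- move=> k m n phi psi _ IH1 _ IH2 F.
  have [F1 H1] := IH1 F; have [F2 H2] := IH2 F1.
  exists F2 => u; split.
  + move/H2 => [t [/H1 [s [hs <-]] <-]]; by exists s.
  + case=> s [hs <-]; apply/H2; exists (phi s); split => //; apply/H1; by exists s.
Qed.

Lemma subc_retr m (F : 'I_m -> option bool) :
  exists k, k <= m /\ exists i : cpt k -> cpt m, box_map i /\
    exists r : cpt m -> cpt k, box_map r /\
      (forall t, subc F t -> i (r t) = t) /\ (forall u, subc F (i u)).
Proof.
elim: m F => [|m IH] F.
- exists 0; split => //; exists (fun s => s); split; first exact: bm_id.
  exists (fun s => s); split; first exact: bm_id.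
  by split => // u [].
- case: (classic (exists j, F j <> None)) => [[j Fj]|nF].
  + case Ej: (F j) Fj => [c|] // _.
    have [k [lek [i0 [bi0 [r0 [br0 [h1 h2]]]]]]] := IH (fun j' => F (lift j j')).
    exists k; split; first by apply: leq_trans lek _.
    exists (fun u => face j c (i0 u)); split; first exact: (@bm_comp _ _ _ i0 (face j c) bi0 (bm_face j c)).
    exists (fun t => r0 (degen j t)); split; first exact: (@bm_comp _ _ _ (degen j) r0 (bm_degen j) br0).
    split.
    * move=> t ht; rewrite h1; last by move=> j' b Fj'; apply: ht.
      apply: functional_extensionality => j'; rewrite /face /degen.
      case: unliftP => [j'' ->|->] //.
      by symmetry; apply: ht.
    * move=> u j' b; rewrite /face; case: unliftP => [j'' ->|->].
      -- exact: h2.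
      -- by rewrite Ej => -[].
  + exists m.+1; split => //; exists (fun s => s); split; first exact: bm_id.
    exists (fun s => s); split; first exact: bm_id.
    split => // u j b Fj; exfalso; apply: nF; exists j; by rewrite Fj.
Qed.


Lemma in_sk_image (X : graph) N n (x : cpt n -> X) : in_sk N x ->
  exists m, m <= N /\ exists w : cpt m -> X, is_cube w /\
    (forall u, exists s, w u = x s) /\
    exists psi : cpt n -> cpt m, box_map psi /\ x = (fun s => w (psi s)).
Proof.
case=> m [leN [y [hy [phi [bphi ->]]]]].
have [F' HF] := box_subc bphi (fun _ => None).
have [k [lek [i [bi [r [br [h1 h2]]]]]]] := subc_retr F'.
exists k; split; first exact: leq_trans lek leN.
exists (fun u => y (i u)); split; first by move=> s t st; apply: hy; apply: box_cadj bi _ _ st.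
split.
- move=> u; have /HF [t [_ et]] := h2 u; exists t; by rewrite et.
- exists (fun s => r (phi s)); split; first exact: (@bm_comp _ _ _ phi r bphi br).
  apply: functional_extensionality => s; rewrite h1 //.
  apply/HF; exists s; split => //.
Qed.

Section Generic.
Variables (N : nat) (A B C D : graph) (a : gmap A B) (a' : gmap A C)
  (b : gmap B D) (c : gmap C D).
Hypothesis comm : forall z, b (a z) = c (a' z).
Hypothesis binj : injective b.
Hypothesis cinj : injective c.
Hypothesis cover : forall m, m <= N -> forall y : cpt m -> D, is_cube y ->
  (exists y', is_cube y' /\ y = fun s => b (y' s)) \/
  (exists y', is_cube y' /\ y = fun s => c (y' s)).
Hypothesis Qlift : forall m (w : cpt m -> C), is_cube w ->
  (forall s, exists u, c (w s) = b u) ->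
  exists w', is_cube w' /\ w = fun s => a' (w' s).

Lemma skmap_inj (X Y : graph) (h : gmap X Y) n (x y : skcell X N n) :
  injective h -> skmap N h n x = skmap N h n y -> x = y.
Proof.
move=> hi e; apply: sig_eqP; apply: functional_extensionality => s.
apply: hi; have := congr1 (fun z => proj1_sig z s) e; by [].
Qed.

Lemma cube_comp (X : graph) m n (y : cpt m -> X) (phi : cpt n -> cpt m) :
  is_cube y -> box_map phi -> is_cube (fun s => y (phi s)).
Proof. by move=> hy bp s t st; apply: hy; apply: box_cadj bp _ _ st. Qed.

Lemma cover_cell n (x : skcell D N n) :
  (exists x', skmap N b n x' = x) \/ (exists y', skmap N c n y' = x).
Proof.
case: x => x0 [hx [m [lem [y [hy [phi [bphi ex]]]]]]].
case: (cover lem hy) => [[y' [hy' ey]]|[y' [hy' ey]]].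
- left.
  have P : is_cube (fun s => y' (phi s)) /\ in_sk N (fun s => y' (phi s)).
    split; first exact: cube_comp.
    by exists m; split => //; exists y'; split => //; exists phi.
  exists (exist (fun c0 => is_cube c0 /\ in_sk N c0) _ P); apply: sig_eqP => /=; by rewrite ex ey.
- right.
  have P : is_cube (fun s => y' (phi s)) /\ in_sk N (fun s => y' (phi s)).
    split; first exact: cube_comp.
    by exists m; split => //; exists y'; split => //; exists phi.
  exists (exist (fun c0 => is_cube c0 /\ in_sk N c0) _ P); apply: sig_eqP => /=; by rewrite ex ey.
Qed.

Lemma pull n (x : skcell B N n) (y : skcell C N n) :
  skmap N b n x = skmap N c n y ->
  exists z : skcell A N n, skmap N a n z = x /\ skmap N a' n z = y.
Proof.
case: x => x0 [hx skx]; case: y => y0 [hy sky] e.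
have e0 : forall s, b (x0 s) = c (y0 s).
  by move=> s; have := congr1 (fun z => proj1_sig z s) e.
have [m [lem [w [hw [himg [psi [bpsi ey]]]]]]] := in_sk_image sky.
have [w' [hw' ew]] : exists w', is_cube w' /\ w = fun s => a' (w' s).
  apply: Qlift => // u; have [s ->] := himg u; exists (x0 s); by rewrite e0.
have P : is_cube (fun s => w' (psi s)) /\ in_sk N (fun s => w' (psi s)).
  split; first exact: cube_comp.
  by exists m; split => //; exists w'; split => //; exists psi.
exists (exist (fun c0 => is_cube c0 /\ in_sk N c0) _ P).
have ey' : y0 = fun s => a' (w' (psi s)) by rewrite ey ew.
split; apply: sig_eqP => /=; apply: functional_extensionality => s.
- apply: binj; by rewrite comm e0 ey'.
- by rewrite ey'.
Qed.

Lemma generic_pushout : is_pushout (skmap N a) (skmap N a') (skmap N b) (skmap N c).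
Proof.
split.
  by move=> n x; apply: sig_eqP => /=; apply: functional_extensionality => s; exact: comm.
move=> T hB hC hBC.
pose h (n : nat) (x : skcell D N n) : cell T n :=
  match excluded_middle_informative (exists x', skmap N b n x' = x) with
  | left e => hB n (proj1_sig (constructive_indefinite_description _ e))
  | right ne => hC n (proj1_sig (constructive_indefinite_description _
       (match cover_cell x with or_introl e => False_ind _ (ne e) | or_intror e => e end)))
  end.
have hb : forall n x, h n (skmap N b n x) = hB n x.
{ move=> n x; rewrite /h; case: excluded_middle_informative => [e|ne].
  - case: constructive_indefinite_description => x' /= ex'.
    by rewrite (skmap_inj binj ex').
  - by exfalso; apply: ne; exists x. }
have hc : forall n y, h n (skmap N c n y) = hC n y.
{ move=> n y; rewrite /h; case: excluded_middle_informative => [e|ne].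
  - case: constructive_indefinite_description => x' /= ex'.
    have [z [<- <-]] := pull ex'; exact: hBC.
  - case: constructive_indefinite_description => y' /= ey'.
    by rewrite (skmap_inj cinj ey'). }
have hnat : forall m n (phi : cpt m -> cpt n) (p : box_map phi) x,
    h m (act (skN D N) p x) = act T p (h n x).
{ move=> m n phi p x; case: (cover_cell x) => [[x' <-]|[y' <-]].
  - by rewrite -(@cfun_nat _ _ (skmap N b)) !hb (@cfun_nat _ _ hB).
  - by rewrite -(@cfun_nat _ _ (skmap N c)) !hc (@cfun_nat _ _ hC). }
exists (@CMap (skN D N) T h hnat); split; first by split.
move=> h' h'b h'c n x /=.
case: (cover_cell x) => [[x' <-]|[y' <-]].
- by rewrite h'b hb.
- by rewrite h'c hc.
Qed.
End Generic.

Lemma pushout_sym (A B C D : cset) (a : cmap A B) (a' : cmap A C)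
    (b : cmap B D) (c : cmap C D) :
  is_pushout a' a c b -> is_pushout a a' b c.
Proof.
case=> h1 h2; split; first by move=> n x; rewrite h1.
move=> T hB hC hBC.
have [h [[e1 e2] u]] := h2 T hC hB (fun n x => esym (hBC n x)).
exists h; split; first by split.
by move=> h' k1 k2; apply: u.
Qed.

Section QuotFacts.
Variables (X : graph) (R : X -> X -> Prop).

Lemma qrep_eqv (x : X) : qeqv R x (qrep (qproj R x)).
Proof.
have e := qrepP (qproj R x); rewrite /= in e.
have : qclass R (qrep (qproj R x)) (qrep (qproj R x)) by exact: rst_refl.
by rewrite -e.
Qed.

Lemma qmem (P : quotg R) y : proj1_sig P y -> qeqv R (qrep P) y.
Proof. by rewrite qrepP. Qed.

Lemma qmem_rep (P : quotg R) : proj1_sig P (qrep P).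
Proof. rewrite qrepP; exact: rst_refl. Qed.

Lemma qproj_rep (P : quotg R) : P = qproj R (qrep P).
Proof. by apply: sig_eqP; rewrite qrepP. Qed.

Lemma qproj_mem (P : quotg R) y : proj1_sig P y -> P = qproj R y.
Proof. move=> /qmem e; rewrite {1}(qproj_rep P); exact: qproj_eq. Qed.

Lemma qproj_mem_self (x : X) : proj1_sig (qproj R x) x.
Proof. exact: rst_refl. Qed.

Lemma qproj_inj x y : qproj R x = qproj R y -> qeqv R x y.
Proof.
move=> e; have : proj1_sig (qproj R y) y by exact: rst_refl.
by rewrite -e.
Qed.

Lemma qlift_proj (Y : graph) (psi : gmap X Y) (HR : forall x y, R x y -> psi x = psi y) x :
  qlift (R:=R) psi (qproj R x) = psi x.
Proof. rewrite /qlift; symmetry; apply: psi_eqv HR _ _ _; exact: qrep_eqv. Qed.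

Lemma qadjE (P Q : quotg R) : adj P Q ->
  exists x y, proj1_sig P x /\ proj1_sig Q y /\ adj x y.
Proof. by []. Qed.

Lemma qcase (P : quotg R) : exists x, P = qproj R x.
Proof. exists (qrep P); exact: qproj_rep. Qed.

Variable pos : X -> nat.
Hypothesis pos_R : forall x y, R x y -> pos x = pos y.

Lemma pos_eqv x y : qeqv R x y -> pos x = pos y.
Proof.
elim=> [? ? /pos_R //| //| ? ? _ -> //| ? ? ? _ -> _ -> //].
Qed.

Definition posQ (P : quotg R) := pos (qrep P).

Lemma posQ_proj x : posQ (qproj R x) = pos x.
Proof. rewrite /posQ; symmetry; apply: pos_eqv; exact: qrep_eqv. Qed.

Lemma posQ_mem (P : quotg R) y : proj1_sig P y -> posQ P = pos y.
Proof. by move/qproj_mem => ->; rewrite posQ_proj. Qed.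

Hypothesis pos_adj : forall x y, adj x y -> pos y <= (pos x).+1.

Lemma posQ_adj (P Q : quotg R) : adj P Q -> posQ Q <= (posQ P).+1.
Proof.
move/qadjE => [x [y [px [qy a]]]].
rewrite (posQ_mem px) (posQ_mem qy); exact: pos_adj.
Qed.
End QuotFacts.

Section Retr.
Variables (XD : graph) (RD : XD -> XD -> Prop) (XX : graph) (RX : XX -> XX -> Prop).
Variable phi : gmap (quotg RX) (quotg RD).
Variable pos : XD -> nat.
Hypothesis pos_R : forall x y, RD x y -> pos x = pos y.
Variable region : nat -> Prop.
Variable corr : XD -> XX -> Prop.
Hypothesis corr_ex : forall y, region (pos y) -> exists x, corr y x.
Hypothesis corr_fun : forall y x x', region (pos y) -> corr y x -> corr y x' ->
  qproj RX x = qproj RX x'.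
Hypothesis corr_R : forall y y' x x', RD y y' -> region (pos y) -> corr y x -> corr y' x' ->
  qproj RX x = qproj RX x'.
Hypothesis corr_sec : forall y x, region (pos y) -> corr y x -> phi (qproj RX x) = qproj RD y.

Lemma corr_chain y y' : qeqv RD y y' -> region (pos y) ->
  forall x x', corr y x -> corr y' x' -> qproj RX x = qproj RX x'.
Proof.
elim=> {y y'}.
- by move=> y y' r ry x x' c1 c2; apply: corr_R r ry c1 c2.
- by move=> y ry x x' c1 c2; apply: corr_fun ry c1 c2.
- move=> y y' e IH ry' x x' c1 c2.
  have ry : region (pos y) by rewrite (pos_eqv pos_R e).
  by symmetry; apply: IH ry x' x c2 c1.
- move=> y z y' e1 IH1 e2 IH2 ry x x' c1 c2.
  have rz : region (pos z) by rewrite -(pos_eqv pos_R e1).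
  have [xz cz] := corr_ex rz.
  by rewrite (IH1 ry x xz c1 cz) (IH2 rz xz x' cz c2).
Qed.

Lemma retr_inj :
  (forall x, exists y x', region (pos y) /\ phi (qproj RX x) = qproj RD y /\
      corr y x' /\ qproj RX x' = qproj RX x) ->
  injective phi.
Proof.
move=> hamd P Q e.
have [x eP] := qcase P; have [x2 eQ] := qcase Q; subst P Q.
have [y [x' [ry [e1 [c1 e1']]]]] := hamd x.
have [y2 [x2' [ry2 [e2 [c2 e2']]]]] := hamd x2.
rewrite -e1' -e2'; apply: (corr_chain _ ry c1 c2).
apply: qproj_inj; by rewrite -e1 -e2.
Qed.

Variable okp : XD -> XD -> Prop.
Hypothesis corr_adj : forall y y' x x', adj y y' -> region (pos y) -> region (pos y') ->
  okp y y' -> corr y x -> corr y' x' -> adj (qproj RX x) (qproj RX x').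

Lemma retr_lift m (y0 : cpt m -> quotg RD) :
  (forall s, region (posQ pos (y0 s))) ->
  (forall s t, cadj s t -> s <> t -> exists y y', proj1_sig (y0 s) y /\
      proj1_sig (y0 t) y' /\ adj y y' /\ okp y y') ->
  exists y' : cpt m -> quotg RX, is_cube y' /\ forall s, phi (y' s) = y0 s.
Proof.
move=> hreg hw.
have hc : forall s, exists x, corr (qrep (y0 s)) x by move=> s; apply: corr_ex; apply: hreg.
pose xs s := proj1_sig (constructive_indefinite_description _ (hc s)).
have xsP : forall s, corr (qrep (y0 s)) (xs s).
  by move=> s; rewrite /xs; case: constructive_indefinite_description.
have key : forall s y x, proj1_sig (y0 s) y -> corr y x -> qproj RX x = qproj RX (xs s).
  move=> s y x my cx; symmetry.
  apply: (corr_chain (qmem my) (hreg s) (xsP s) cx).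
exists (fun s => qproj RX (xs s)); split.
- move=> s t st; case: (classic (s = t)) => [<-|nst]; first exact: adj_refl.
  have [y [y' [my [my' [a ok]]]]] := hw s t st nst.
  have ry : region (pos y) by rewrite -(posQ_mem pos_R my).
  have ry' : region (pos y') by rewrite -(posQ_mem pos_R my').
  have [x cx] := corr_ex ry; have [x' cx'] := corr_ex ry'.
  rewrite -(key s y x my cx) -(key t y' x' my' cx').
  exact: corr_adj a ry ry' ok cx cx'.
- by move=> s; rewrite (corr_sec (hreg s) (xsP s)) -qproj_rep.
Qed.
End Retr.

Definition hamd m (s t : cpt m) := #|[pred j | s j != t j]|.

Lemma hamd_sym m (s t : cpt m) : hamd s t = hamd t s.
Proof. by apply: eq_card => j; rewrite !inE /= eq_sym. Qed.

Lemma hamd_le m (s t : cpt m) : hamd s t <= m.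
Proof. by rewrite /hamd; apply: leq_trans (max_card _) _; rewrite card_ord. Qed.

Lemma hamd_edge m (s t u : cpt m) : s <> t -> hamd u s <= m.-1 \/ hamd u t <= m.-1.
Proof.
move=> nst.
have [j hj] : exists j, s j != t j.
  apply: NNPP => nj; apply: nst; apply: functional_extensionality => j.
  by apply/eqP; apply: negbNE; apply/negP => h; apply: nj; exists j.
have gen : forall w : cpt m, u j = w j -> hamd u w <= m.-1.
  move=> w e; have c1 : #|predC1 j| = m.-1 by rewrite cardC1 card_ord.
  rewrite /hamd -c1.
  apply: subset_leq_card; apply/subsetP => i /=; rewrite !inE.
  by apply: contra => /eqP ->; apply/eqP.
have : u j = s j \/ u j = t j by move: hj; case: (u j); case: (s j); case: (t j); auto.
by case=> e; [left|right]; apply: gen.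
Qed.

Lemma hamd_lip_aux m (P : cpt m -> nat) :
  (forall s t, cadj s t -> P t <= (P s).+1) ->
  forall n s t, hamd s t = n -> P t <= P s + n.
Proof.
move=> hP n; elim: n => [|n IH] s t e.
- have -> : s = t.
    apply: functional_extensionality => j; apply/eqP; apply: negbNE; apply/negP => h.
    have : 0 < hamd s t by apply/card_gt0P; exists j.
    by rewrite e.
  by rewrite addn0.
- have [j hj] : exists j, s j != t j.
    have : 0 < hamd s t by rewrite e.
    by case/card_gt0P => j; exists j.
  pose s' := fun i => if i == j then t j else s i.
  have ss' : cadj s s'.
    move=> i i'; rewrite /s'; case: (i =P j) => [->|_]; last by [].
    case: (i' =P j) => [->|_] //.
  have e' : hamd s' t = n.
    have := cardD1 j [pred i | s i != t i]; rewrite -/(hamd s t) e inE /= hj add1n => -[] ->.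
    apply: eq_card => i; rewrite !inE /s'; case: ifP => [/eqP ->|/negbT ne]; first by rewrite !eqxx.
    by [].
  have := IH s' t e'; have := hP s s' ss'; lia.
Qed.

Lemma hamd_lip m (P : cpt m -> nat) :
  (forall s t, cadj s t -> P t <= (P s).+1) ->
  forall s t, P t <= P s + hamd s t.
Proof. by move=> hP s t; apply: hamd_lip_aux. Qed.

Lemma lmap_proj (G H K : graph) (f : gmap G H) (g : gmap G K) k m x :
  lmap f g k m (cproj f (gid G) x) = l0 f g m x.
Proof.
rewrite /lmap /=; symmetry.
apply: (psi_eqv (psi := GMap (l0_gmap f g m)) (@l0_R _ _ _ f g k m)); exact: qrep_eqv.
Qed.

Lemma rmap_proj (G H K : graph) (f : gmap G H) (g : gmap G K) k m x :
  rmap f g k m (cproj (gid G) g x) = r0 f g m x.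
Proof.
rewrite /rmap /=; symmetry.
apply: (psi_eqv (psi := GMap (r0_gmap f g m)) (@r0_R _ _ _ f g k m)); exact: qrep_eqv.
Qed.

Definition l0r (G H K : graph) k m (x : cylX G H G k) : cylX G H K m :=
  match x with
  | inl h => inl h
  | inr (inl (v, t)) => inr (inl (v, clamp m (t + 0)))
  | inr (inr v) => inr (inl (v, clamp m (k + 0)))
  end.

Definition r0r (G H K : graph) k m (x : cylX G G K k) : cylX G H K m :=
  match x with
  | inl v => inr (inl (v, clamp m (0 + (m - k))))
  | inr (inl (v, t)) => inr (inl (v, clamp m (t + (m - k))))
  | inr (inr w) => inr (inr w)
  end.

Lemma l0E (G H K : graph) (f : gmap G H) (g : gmap G K) k m x :
  l0 f g m x = cproj f g (@l0r G H K k m x).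
Proof. by case: x => [h|[[v t]|v]]. Qed.

Lemma r0E (G H K : graph) (f : gmap G H) (g : gmap G K) k m x :
  r0 f g m x = cproj f g (@r0r G H K k m x).
Proof. by case: x => [h|[[v t]|v]]. Qed.

Lemma l0r_adj (G H K : graph) k m x y : adj x y -> adj (@l0r G H K k m x) (@l0r G H K k m y).
Proof.
case: x => [h|[[v t]|v]]; case: y => [h'|[[v' t']|v']] //= a.
- case: a => /= [[-> a]|[a ->]]; last by right.
  by left; split=> //; apply: clamp_adj.
- by right.
Qed.

Lemma r0r_adj (G H K : graph) k m x y : adj x y -> adj (@r0r G H K k m x) (@r0r G H K k m y).
Proof.
case: x => [h|[[v t]|v]]; case: y => [h'|[[v' t']|v']] //= a.
- by right.
- case: a => /= [[-> a]|[a ->]]; last by right.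
  by left; split=> //; apply: clamp_adj.
Qed.

Definition gcomp (X Y Z : graph) (u : gmap X Y) (w : gmap Y Z) : gmap X Z :=
  @GMap X Z (fun x => w (u x)) (fun x y a => gfunP w (gfunP u a)).

Definition isK (X Y Z : Type) (y : X + (Y + Z)) := match y with inr (inr _) => True | _ => False end.
Definition isH (X Y Z : Type) (y : X + (Y + Z)) := match y with inl _ => True | _ => False end.

Lemma clamp_adj0 m a b : (a = b \/ a.+1 = b \/ b.+1 = a) -> iadj (clamp m a) (clamp m b).
Proof. rewrite /iadj !clampE; lia. Qed.

Ltac boxeq := rewrite /=; simpl in *; congr (inr (inl (_, _))); apply: val_inj; rewrite /= ?clampE; lia.

Section Cyl.
Variables (G H K : graph) (f : gmap G H) (g : gmap G K) (p q1 q2 : nat).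
Local Notation M := (p + q1 + q2).
Local Notation XD := (cylX G H K M).
Local Notation D := (Cyl f g M).
Local Notation XB := (cylX G H G (p + q1)).
Local Notation B := (Cyl f (gid G) (p + q1)).
Local Notation XC := (cylX G G K (p + q2)).
Local Notation C := (Cyl (gid G) g (p + q2)).
Local Notation XA := (cylX G G G p).
Local Notation A := (Cyl (gid G) (gid G) p).
Local Notation bm := (lmap f g (p + q1) M).
Local Notation cm := (rmap f g (p + q2) M).
Local Notation am := (rmap f (gid G) p (p + q1)).
Local Notation am' := (lmap (gid G) g p (p + q2)).

Hypothesis Hf : q1 = 0 -> injective f.
Hypothesis Hg : q2 = 0 -> injective g.
Hypothesis Hq : 0 < q1 + q2.

Definition posr (y : XD) : nat :=
  match y with
  | inl h => if excluded_middle_informative (exists v, f v = h) then 1 else 0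
  | inr (inl (v, t)) => t.+1
  | inr (inr k) => if excluded_middle_informative (exists v, g v = k) then M.+1 else M.+2
  end.

Lemma posr_H (y : XD) : isH y -> posr y <= 1.
Proof. by case: y => [h|[[v t]|k]] //= _; destruct (excluded_middle_informative _). Qed.

Lemma posr_Hv v : posr (inl (f v)) = 1.
Proof. rewrite /=; case: excluded_middle_informative => // ne; exfalso; apply: ne; by exists v. Qed.

Lemma posr_H1 h : posr (inl h) = 1 -> exists v, f v = h.
Proof. by rewrite /=; case: excluded_middle_informative. Qed.

Lemma posr_K (y : XD) : isK y -> M.+1 <= posr y.
Proof. by case: y => [h|[[v t]|k]] //= _; destruct (excluded_middle_informative _). Qed.

Lemma posr_Kle (y : XD) : isK y -> posr y <= M.+2.
Proof. by case: y => [h|[[v t]|k]] //= _; destruct (excluded_middle_informative _). Qed.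

Lemma posr_Kv v : posr (inr (inr (g v))) = M.+1.
Proof. rewrite /=; case: excluded_middle_informative => // ne; exfalso; apply: ne; by exists v. Qed.

Lemma posr_K1 k : posr (inr (inr k)) <= M.+1 -> exists v, g v = k.
Proof. rewrite /=; destruct (excluded_middle_informative _) as [e|ne]; [by move=> _; exact: e|move=> /= h; exfalso; lia]. Qed.

Lemma regK_q2 (y : XD) : posr y <= p + q1 + 1 -> isK y -> q2 = 0.
Proof. move=> r hk; have := posr_K hk; lia. Qed.

Lemma regH_q1 (y : XD) : q1.+1 <= posr y -> isH y -> q1 = 0.
Proof. move=> r hh; have := posr_H hh; lia. Qed.

Lemma regK_g (y : XD) : posr y <= M.+1 ->
  match y with inr (inr k) => exists v, g v = k | _ => True end.
Proof. by case: y => [h|[[v t]|k]] //; apply: posr_K1. Qed.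

Lemma regH_f (y : XD) : 1 <= posr y ->
  match y with inl h => exists v, f v = h | _ => True end.
Proof.
case: y => [h|[[v t]|k]] //=.
by destruct (excluded_middle_informative _).
Qed.

Lemma posr_R y y' : cylR f g y y' -> posr y = posr y'.
Proof. by case=> v [[e1 e2]|[e1 e2]]; subst; rewrite ?posr_Hv ?posr_Kv. Qed.

Lemma posr_adj y y' : adj y y' -> posr y' <= (posr y).+1.
Proof.
case: y => [h|[[v t]|k]]; case: y' => [h'|[[v' t']|k']] // a.
- have := @posr_H (inl h) I; have := @posr_H (inl h') I; lia.
- move: a => /= [[_ a]|[_ e]] /=; first by simpl in a; rewrite /iadj in a; lia.
  simpl in e; rewrite e; lia.
- rewrite /=; do 2 destruct (excluded_middle_informative _); simpl; lia.
Qed.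

Local Notation PQ := (posQ posr).

Definition corrB (y : XD) (x : XB) : Prop :=
  match y with
  | inl h => x = inl h
  | inr (inl (v, t)) => x = inr (inl (v, clamp (p + q1) t))
  | inr (inr k) => exists v, g v = k /\ x = inr (inr v)
  end.
Definition regB n := n <= p + q1 + 1.
Definition okpB (y y' : XD) := ~ (isK y /\ isK y').

Lemma corrB_ex y : regB (posr y) -> exists x, corrB y x.
Proof.
rewrite /regB => r; have := regK_g (y := y); case: y r => [h|[[v t]|k]] r; try by eexists.
case=> [|v e]; first by have := regK_q2 r I; lia.
by exists (inr (inr v)); exists v.
Qed.

Lemma corrB_fun y x x' : regB (posr y) -> corrB y x -> corrB y x' -> cproj f (gid G) x = cproj f (gid G) x'.
Proof.
rewrite /regB; case: y => [h|[[v t]|k]]; try by move=> _ -> ->.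
move=> r [v [e ->]] [v' [e' ->]].
have q20 := regK_q2 r I.
by rewrite (Hg q20 (etrans e (esym e'))).
Qed.

Lemma corrB_R y y' x x' : cylR f g y y' -> regB (posr y) -> corrB y x -> corrB y' x' ->
  cproj f (gid G) x = cproj f (gid G) x'.
Proof.
rewrite /regB; case=> v [[e1 e2]|[e1 e2]]; subst => /= r.
- move=> -> ->; apply: cproj_R; exists v; left; split => //; boxeq.
- move=> -> [v' [e ->]].
  have q20 : q2 = 0 by lia.
  rewrite -(Hg q20 e); apply: cproj_R; exists v'; right; split => //; boxeq.
Qed.

Lemma corrB_sec y x : regB (posr y) -> corrB y x -> bm (cproj f (gid G) x) = cproj f g y.
Proof.
rewrite /regB lmap_proj (l0E (K := K)); case: y => [h|[[v t]|k]] r /=.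
- by move=> ->.
- move=> ->; congr (cproj f g _); boxeq.
- case=> v [<- ->] /=; have q20 := regK_q2 r I.
  apply: cproj_R; exists v; right; split => //; boxeq.
Qed.

Lemma corrB_d x : exists y x', regB (posr y) /\ bm (cproj f (gid G) x) = cproj f g y /\
   corrB y x' /\ cproj f (gid G) x' = cproj f (gid G) x.
Proof.
exists (l0r K M x); rewrite /regB lmap_proj (l0E (K := K)).
case: x => [h|[[v t]|v]].
- exists (inl h); split; last by []; apply: leq_trans (posr_H (y := inl h) I) _; lia.
- have := ltn_ord t; exists (inr (inl (v, clamp (p + q1) (clamp M (t + 0))))); split; first by rewrite /= clampE; lia.
  split => //; split => //; congr (cproj _ _ _); boxeq.
- exists (inr (inl (v, clamp (p + q1) (clamp M (p + q1 + 0))))).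
  split; first by rewrite /= clampE; lia.
  split => //; split => //; apply: cproj_R; exists v; right; split => //; boxeq.
Qed.

Lemma corrB_adj y y' x x' : adj y y' -> regB (posr y) -> regB (posr y') -> okpB y y' ->
  corrB y x -> corrB y' x' -> adj (cproj f (gid G) x) (cproj f (gid G) x').
Proof.
move=> a _ _ ok c1 c2; apply: cproj_gmap.
move: a ok c1 c2; case: y => [h|[[v t]|k]]; case: y' => [h'|[[v' t']|k']] //= a.
- by move=> _ -> ->.
- move=> _ -> -> /=; case: a => /= [[-> a]|[a ->]]; last by right.
  by left; split => //; apply: clamp_adj0; rewrite /iadj in a.
- by move=> ok; exfalso; apply: ok.
Qed.

Lemma binj : injective bm.
Proof.
exact: (retr_inj (phi := bm) posr_R (region := regB) (corr := corrB) corrB_ex corrB_fun corrB_R corrB_d).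
Qed.

Lemma liftB m (y : cpt m -> D) : is_cube y ->
  (forall s, PQ (y s) <= p + q1 + 1) ->
  (forall s t, cadj s t -> s <> t -> PQ (y s) <= M \/ PQ (y t) <= M) ->
  exists y', is_cube y' /\ y = fun s => bm (y' s).
Proof.
move=> hy h1 h2.
have hw : forall s t, cadj s t -> s <> t -> exists y1 y2, proj1_sig (y s) y1 /\
      proj1_sig (y t) y2 /\ adj y1 y2 /\ okpB y1 y2.
  move=> s t st nst.
  have [y1 [y2 [m1 [m2 a]]]] := qadjE (hy s t st).
  exists y1, y2; do 3 split => //.
  move=> [k1 k2]; have := h2 s t st nst.
  rewrite (posQ_mem posr_R m1) (posQ_mem posr_R m2).
  have := posr_K k1; have := posr_K k2; lia.
have [y' [cy' ey']] := retr_lift (phi := bm) posr_R (region := regB) (corr := corrB)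
   corrB_ex corrB_fun corrB_R corrB_sec (okp := okpB) corrB_adj h1 hw.
exists y'; split => //; apply: functional_extensionality => s; by rewrite ey'.
Qed.

Definition corrC (y : XD) (x : XC) : Prop :=
  match y with
  | inl h => exists v, f v = h /\ x = inl v
  | inr (inl (v, t)) => x = inr (inl (v, clamp (p + q2) (t - q1)))
  | inr (inr k) => x = inr (inr k)
  end.
Definition regC n := q1.+1 <= n.
Definition okpC (y y' : XD) := ~ (isH y /\ isH y').

Lemma corrC_ex y : regC (posr y) -> exists x, corrC y x.
Proof.
rewrite /regC => r; have := regH_f (y := y); case: y r => [h|[[v t]|k]] r; try by eexists.
case=> [|v e]; first by lia.
by exists (inl v); exists v.
Qed.

Lemma corrC_fun y x x' : regC (posr y) -> corrC y x -> corrC y x' ->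
  cproj (gid G) g x = cproj (gid G) g x'.
Proof.
rewrite /regC; case: y => [h|[[v t]|k]]; try by move=> _ -> ->.
move=> r [v [e ->]] [v' [e' ->]].
have q10 := regH_q1 r I.
by rewrite (Hf q10 (etrans e (esym e'))).
Qed.

Lemma corrC_R y y' x x' : cylR f g y y' -> regC (posr y) -> corrC y x -> corrC y' x' ->
  cproj (gid G) g x = cproj (gid G) g x'.
Proof.
rewrite /regC; case=> v [[e1 e2]|[e1 e2]]; subst => /= r.
- move=> -> [v' [e ->]].
  have q10 : q1 = 0 by lia.
  rewrite -(Hf q10 e); apply: cproj_R; exists v'; left; split => //; boxeq.
- move=> -> ->; apply: cproj_R; exists v; right; split => //; boxeq.
Qed.

Lemma corrC_sec y x : regC (posr y) -> corrC y x -> cm (cproj (gid G) g x) = cproj f g y.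
Proof.
rewrite /regC rmap_proj (r0E (H := H)); case: y => [h|[[v t]|k]] r.
- case=> v [<- ->]; have q10 := regH_q1 r I.
  apply: cproj_R; exists v; left; split => //; boxeq.
- move=> ->; congr (cproj f g _); have ? := ltn_ord t; boxeq.
- by move=> ->.
Qed.

Lemma corrC_d x : exists y x', regC (posr y) /\ cm (cproj (gid G) g x) = cproj f g y /\
   corrC y x' /\ cproj (gid G) g x' = cproj (gid G) g x.
Proof.
exists (r0r H M x); rewrite /regC rmap_proj (r0E (H := H)).
case: x => [v|[[v t]|k]].
- exists (inr (inl (v, clamp (p + q2) (clamp M (0 + (M - (p + q2))) - q1)))).
  split; first by rewrite /= clampE; lia.
  split => //; split => //; apply: cproj_R; exists v; left; split => //; boxeq.
- have := ltn_ord t.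
  exists (inr (inl (v, clamp (p + q2) (clamp M (t + (M - (p + q2))) - q1)))).
  split; first by rewrite /= clampE; lia.
  split => //; split => //; congr (cproj _ _ _); boxeq.
- exists (inr (inr k)); split; last by [].
  apply: leq_trans (posr_K (y := inr (inr k)) I); lia.
Qed.

Lemma corrC_adj y y' x x' : adj y y' -> regC (posr y) -> regC (posr y') -> okpC y y' ->
  corrC y x -> corrC y' x' -> adj (cproj (gid G) g x) (cproj (gid G) g x').
Proof.
move=> a _ _ ok c1 c2; apply: cproj_gmap.
move: a ok c1 c2; case: y => [h|[[v t]|k]]; case: y' => [h'|[[v' t']|k']] // a.
- by move=> ok; exfalso; apply: ok.
- move=> _ -> -> /=; move: a => /= [[e a]|[a e]]; simpl in e, a; subst.
  + left; split => //; apply: clamp_adj0; rewrite /iadj in a; lia.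
  + by right; split.
- by move=> _ -> ->.
Qed.

Lemma cinj : injective cm.
Proof.
exact: (retr_inj (phi := cm) posr_R (region := regC) (corr := corrC) corrC_ex corrC_fun corrC_R corrC_d).
Qed.

Lemma liftC m (y : cpt m -> D) : is_cube y ->
  (forall s, q1.+1 <= PQ (y s)) ->
  (forall s t, cadj s t -> s <> t -> 2 <= PQ (y s) \/ 2 <= PQ (y t)) ->
  exists y', is_cube y' /\ y = fun s => cm (y' s).
Proof.
move=> hy h1 h2.
have hw : forall s t, cadj s t -> s <> t -> exists y1 y2, proj1_sig (y s) y1 /\
      proj1_sig (y t) y2 /\ adj y1 y2 /\ okpC y1 y2.
  move=> s t st nst.
  have [y1 [y2 [m1 [m2 a]]]] := qadjE (hy s t st).
  exists y1, y2; do 3 split => //.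
  move=> [k1 k2]; have := h2 s t st nst.
  rewrite (posQ_mem posr_R m1) (posQ_mem posr_R m2).
  have := posr_H k1; have := posr_H k2; lia.
have [y' [cy' ey']] := retr_lift (phi := cm) posr_R (region := regC) (corr := corrC)
   corrC_ex corrC_fun corrC_R corrC_sec (okp := okpC) corrC_adj h1 hw.
exists y'; split => //; apply: functional_extensionality => s; by rewrite ey'.
Qed.

Definition corrA (y : XD) (x : XA) : Prop :=
  match y with
  | inl h => exists v, f v = h /\ x = inl v
  | inr (inl (v, t)) => x = inr (inl (v, clamp p (t - q1)))
  | inr (inr k) => exists v, g v = k /\ x = inr (inr v)
  end.
Definition regA n := q1.+1 <= n /\ n <= p + q1 + 1.
Definition okpA (y y' : XD) := ~ (isH y /\ isH y') /\ ~ (isK y /\ isK y').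
Definition phiA : gmap A D := gcomp am' cm.

Lemma corrA_ex y : regA (posr y) -> exists x, corrA y x.
Proof.
rewrite /regA => -[r1 r2]; have := regH_f (y := y); have := regK_g (y := y).
case: y r1 r2 => [h|[[v t]|k]] r1 r2; try by eexists.
- move=> _; case=> [|v e]; first by lia.
  by exists (inl v); exists v.
- case=> [|v e]; first by lia.
  by exists (inr (inr v)); exists v.
Qed.

Lemma corrA_fun y x x' : regA (posr y) -> corrA y x -> corrA y x' ->
  cproj (gid G) (gid G) x = cproj (gid G) (gid G) x'.
Proof.
rewrite /regA; case: y => [h|[[v t]|k]] [r1 r2]; try by move=> -> ->.
- move=> [v [e ->]] [v' [e' ->]].
  have q10 := regH_q1 r1 I.
  by rewrite (Hf q10 (etrans e (esym e'))).
- move=> [v [e ->]] [v' [e' ->]].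
  have q20 := regK_q2 r2 I.
  by rewrite (Hg q20 (etrans e (esym e'))).
Qed.

Lemma corrA_R y y' x x' : cylR f g y y' -> regA (posr y) -> corrA y x -> corrA y' x' ->
  cproj (gid G) (gid G) x = cproj (gid G) (gid G) x'.
Proof.
rewrite /regA; case=> v [[e1 e2]|[e1 e2]]; subst => /= -[r1 r2].
- move=> -> [v' [e ->]].
  have q10 : q1 = 0 by lia.
  rewrite -(Hf q10 e); apply: cproj_R; exists v'; left; split => //; boxeq.
- move=> -> [v' [e ->]].
  have q20 : q2 = 0 by lia.
  rewrite -(Hg q20 e); apply: cproj_R; exists v'; right; split => //; boxeq.
Qed.

Lemma phiA_E u : phiA u = cm (am' u).
Proof. by []. Qed.

Lemma corrA_sec y x : regA (posr y) -> corrA y x -> phiA (cproj (gid G) (gid G) x) = cproj f g y.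
Proof.
rewrite /regA phiA_E lmap_proj (l0E (K := K)) rmap_proj (r0E (H := H)).
case: y => [h|[[v t]|k]] [r1 r2].
- case=> v [<- ->]; have q10 := regH_q1 r1 I.
  apply: cproj_R; exists v; left; split => //; boxeq.
- move=> ->; congr (cproj f g _); have ? := ltn_ord t; boxeq.
- case=> v [<- ->]; have q20 := regK_q2 r2 I.
  apply: cproj_R; exists v; right; split => //; boxeq.
Qed.

Lemma corrA_adj y y' x x' : adj y y' -> regA (posr y) -> regA (posr y') -> okpA y y' ->
  corrA y x -> corrA y' x' -> adj (cproj (gid G) (gid G) x) (cproj (gid G) (gid G) x').
Proof.
move=> a _ _ [ok1 ok2] c1 c2; apply: cproj_gmap.
move: a ok1 ok2 c1 c2; case: y => [h|[[v t]|k]]; case: y' => [h'|[[v' t']|k']] // a.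
- by move=> ok; exfalso; apply: ok.
- move=> _ _ -> -> /=; move: a => /= [[e a]|[a e]]; simpl in e, a; subst.
  + left; split => //; apply: clamp_adj0; rewrite /iadj in a; lia.
  + by right; split.
- by move=> _ ok; exfalso; apply: ok.
Qed.

Lemma posQ_cm (u : C) : q1.+1 <= PQ (cm u).
Proof.
have [x ->] := qcase u.
rewrite rmap_proj (r0E (H := H)) (posQ_proj posr_R).
case: x => [v|[[v t]|k]].
- by rewrite /= clampE; lia.
- by have := ltn_ord t; rewrite /= clampE; lia.
- apply: leq_trans (posr_K (y := inr (inr k)) I); lia.
Qed.

Lemma posQ_bm (u : B) : PQ (bm u) <= p + q1 + 1.
Proof.
have [x ->] := qcase u.
rewrite lmap_proj (l0E (K := K)) (posQ_proj posr_R).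
case: x => [h|[[v t]|v]].
- apply: leq_trans (posr_H (y := inl h) I) _; lia.
- by have := ltn_ord t; rewrite /= clampE; lia.
- by rewrite /= clampE; lia.
Qed.

Lemma commA (z : A) : bm (am z) = cm (am' z).
Proof.
have [x ->] := qcase z.
rewrite rmap_proj (r0E (H := H)) lmap_proj (l0E (K := K)).
rewrite lmap_proj (l0E (K := K)) rmap_proj (r0E (H := H)).
congr (cproj f g _).
case: x => [v|[[v t]|v]]; [boxeq| have ? := ltn_ord t; boxeq| boxeq].
Qed.


Lemma cover m : m <= p.+1 -> forall y : cpt m -> D, is_cube y ->
  (exists y', is_cube y' /\ y = fun s => bm (y' s)) \/
  (exists y', is_cube y' /\ y = fun s => cm (y' s)).
Proof.
move=> lem y hy.
pose P := fun s => PQ (y s).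
have lip : forall s t, P t <= P s + hamd s t.
  apply: hamd_lip => s t st; exact: (posQ_adj posr_R posr_adj (hy s t st)).
have hdm : forall s t : cpt m, hamd s t <= m by move=> s t; exact: hamd_le.
have edge : forall s0 s t : cpt m, s <> t -> hamd s0 s <= m - 1 \/ hamd s0 t <= m - 1.
  move=> s0 s t nst; case: (hamd_edge s0 nst) => h; [left|right]; lia.
case: (q2 =P 0) => [q20|q2n0].
- have q1p : 0 < q1 by lia.
  case: (classic (exists s0, P s0 <= q1)) => [[s0 hs0]|nex].
  + left; apply: liftB => //.
    * move=> s; have := lip s0 s; have := hdm s0 s; rewrite /P in hs0 *; lia.
    * move=> s t st nst; case: (edge s0 s t nst) => h; [left|right].
      -- have := lip s0 s; rewrite /P in hs0 *; lia.
      -- have := lip s0 t; rewrite /P in hs0 *; lia.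
  + right; apply: liftC => //.
    * move=> s; have : ~ P s <= q1 by move=> h; apply: nex; exists s.
      rewrite /P; lia.
    * move=> s t _ _; left; have : ~ P s <= q1 by move=> h; apply: nex; exists s.
      rewrite /P; lia.
- case: (classic (exists s0, p + q1 + 2 <= P s0)) => [[s0 hs0]|nex].
  + right; apply: liftC => //.
    * move=> s; have := lip s s0; have := hdm s s0; rewrite /P in hs0 *; lia.
    * move=> s t st nst; case: (edge s0 s t nst) => h; [left|right].
      -- have := lip s s0; rewrite hamd_sym in h; rewrite /P in hs0 *; lia.
      -- have := lip t s0; rewrite hamd_sym in h; rewrite /P in hs0 *; lia.
  + left; apply: liftB => //.
    * move=> s; have : ~ p + q1 + 2 <= P s by move=> h; apply: nex; exists s.
      rewrite /P; lia.
    * move=> s t _ _; left; have : ~ p + q1 + 2 <= P s by move=> h; apply: nex; exists s.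
      rewrite /P; lia.
Qed.

Lemma QliftC : 0 < q2 -> forall m (w : cpt m -> C), is_cube w ->
  (forall s, exists u, cm (w s) = bm u) ->
  exists w', is_cube w' /\ w = fun s => am' (w' s).
Proof.
move=> q2p m w hw hex.
have hreg : forall s, regA (PQ (cm (w s))).
  move=> s; split; first exact: posQ_cm.
  have [u ->] := hex s; exact: posQ_bm.
have hwit : forall s t, cadj s t -> s <> t -> exists y1 y2, proj1_sig (cm (w s)) y1 /\
    proj1_sig (cm (w t)) y2 /\ adj y1 y2 /\ okpA y1 y2.
  { move=> s t st _; have [x1 [x2 [m1 [m2 a]]]] := qadjE (hw s t st).
  have e1 : cm (w s) = cproj f g (r0r H M x1).
    by rewrite (qproj_mem m1) -(r0E f g) -rmap_proj.
  have e2 : cm (w t) = cproj f g (r0r H M x2).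
    by rewrite (qproj_mem m2) -(r0E f g) -rmap_proj.
  exists (r0r H M x1), (r0r H M x2).
  rewrite e1 e2; split; first exact: qproj_mem_self.
  split; first exact: qproj_mem_self.
  split; first exact: r0r_adj.
  split.
  + by case: (x1) => [?|[[? ?]|?]] [].
  + move=> [k1 _]; have := hreg s; rewrite e1 (posQ_proj posr_R) => -[_].
    have := posr_K k1; lia. }
have [w' [cw' ew']] := retr_lift (phi := phiA) posr_R (region := regA) (corr := corrA)
   corrA_ex corrA_fun corrA_R corrA_sec (okp := okpA) corrA_adj (y0 := fun s => cm (w s)) hreg hwit.
exists w'; split => //; apply: functional_extensionality => s; apply: cinj.
by rewrite -ew' phiA_E.
Qed.

Lemma QliftB : q2 = 0 -> forall m (w : cpt m -> B), is_cube w ->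
  (forall s, exists u, bm (w s) = cm u) ->
  exists w', is_cube w' /\ w = fun s => am (w' s).
Proof.
move=> q20 m w hw hex.
have q1p : 0 < q1 by lia.
have hreg : forall s, regA (PQ (bm (w s))).
  move=> s; split; last exact: posQ_bm.
  have [u ->] := hex s; exact: posQ_cm.
have hwit : forall s t, cadj s t -> s <> t -> exists y1 y2, proj1_sig (bm (w s)) y1 /\
    proj1_sig (bm (w t)) y2 /\ adj y1 y2 /\ okpA y1 y2.
  { move=> s t st _; have [x1 [x2 [m1 [m2 a]]]] := qadjE (hw s t st).
  have e1 : bm (w s) = cproj f g (l0r K M x1).
    by rewrite (qproj_mem m1) -(l0E f g) -lmap_proj.
  have e2 : bm (w t) = cproj f g (l0r K M x2).
    by rewrite (qproj_mem m2) -(l0E f g) -lmap_proj.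
  exists (l0r K M x1), (l0r K M x2).
  rewrite e1 e2; split; first exact: qproj_mem_self.
  split; first exact: qproj_mem_self.
  split; first exact: l0r_adj.
  split.
  + move=> [k1 _]; have := hreg s; rewrite e1 (posQ_proj posr_R) => -[h _].
    have := posr_H k1; lia.
  + by case: (x1) => [?|[[? ?]|?]] []. }
have [w' [cw' ew']] := retr_lift (phi := phiA) posr_R (region := regA) (corr := corrA)
   corrA_ex corrA_fun corrA_R corrA_sec (okp := okpA) corrA_adj (y0 := fun s => bm (w s)) hreg hwit.
exists w'; split => //; apply: functional_extensionality => s; apply: binj.
by rewrite -ew' phiA_E commA.
Qed.

Lemma main_square : cyl_square f g p q1 q2.
Proof.
rewrite /cyl_square /skel_pushout.
case: (q2 =P 0) => [q20|q2n0].
- apply: pushout_sym.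
  apply: (generic_pushout (a := am') (a' := am) (b := cm) (c := bm)).
  + by move=> z; symmetry; exact: commA.
  + exact: cinj.
  + exact: binj.
  + by move=> m lem y hy; case: (cover lem hy) => h; [right|left].
  + exact: QliftB q20.
- apply: generic_pushout.
  + exact: commA.
  + exact: binj.
  + exact: cinj.
  + exact: cover.
  + apply: QliftC; lia.
Qed.
End Cyl.

Theorem lemma2p18 (G H K : graph) (f : gmap G H) (g : gmap G K) :
  (forall p q1 q2 : nat, 1 <= q1 -> 1 <= q2 -> cyl_square f g p q1 q2) /\
  (injective f -> forall p q2 : nat, 1 <= q2 -> cyl_square f g p 0 q2) /\
  (injective g -> forall p q1 : nat, 1 <= q1 -> cyl_square f g p q1 0).
Proof.
split; [|split].
- move=> p q1 q2 h1 h2; apply: main_square; [move=> e; exfalso; lia|move=> e; exfalso; lia|lia].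
- move=> fi p q2 h2; apply: main_square; [by []|move=> e; exfalso; lia|lia].
- move=> gi p q1 h1; apply: main_square; [move=> e; exfalso; lia|by []|lia].
Qed.
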